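(* Let ${\bf R}=(R_1,\dots,R_d)\in\mathbb R_+^d$, $u=\max\{R_1,\dots,R_d\}$, $v=\min\{R_1,\dots,R_d\}$, and $g({\bf R})=\frac{1}{1/R_1+\cdots+1/R_d}$. Then $v\le d\,g({\bf R})\le u$ and, for all $d\in\mathbb N_+$, $$2^v\sqrt{\frac{1}{e(d+2u)}}\le\big(\mathrm{vol}(B^d_{2{\bf R}})\big)^{g({\bf R})}\le 2^u\Big(\frac{2v+1}{2v}\Big)^{\frac{u}{2v}}\sqrt{\frac{2eu}{d}}.$$
   Context: $B^d_{2{\bf R}}=\{{\bf x}\in\mathbb R^d:\sum_{j=1}^d|x_j|^{2R_j}\le1\}$ and vol is Lebesgue measure; explicitly $\mathrm{vol}(B^d_{2{\bf R}})=2^d\frac{\Gamma(1+\frac{1}{2R_1})\cdots\Gamma(1+\frac{1}{2R_d})}{\Gamma(1+\frac{1}{2R_1}+\cdots+\frac{1}{2R_d})}$. *)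

(* Defs.v *)
From Stdlib Require Import Reals Lra ClassicalEpsilon.
Open Scope R_scope.

Definition gamma_integrand (x t : R) : R := Rpower t (x - 1) * exp (- t).

(* g is the value of the improper Riemann integral  int_0^oo t^(x-1) e^(-t) dt,
   i.e. the limit of int_a^b as a -> 0+ and b -> +oo. *)
Definition is_Gamma (x g : R) : Prop :=
  forall eps : R, 0 < eps ->
  exists delta M : R, 0 < delta /\ 0 < M /\
    forall (a b : R) (pr : Riemann_integrable (gamma_integrand x) a b),
      0 < a < delta -> M < b -> Rabs (RiemannInt pr - g) < eps.

(* Euler's Gamma function (meaningful for x > 0, where the limit exists and is unique). *)
Definition Gamma (x : R) : R := epsilon (inhabits 0) (fun g => is_Gamma x g).

Fixpoint rsum (n : nat) (f : nat -> R) : R :=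
  match n with O => 0 | S m => rsum m f + f m end.
Fixpoint rprod (n : nat) (f : nat -> R) : R :=
  match n with O => 1 | S m => rprod m f * f m end.

Fixpoint rmax_upto (n : nat) (f : nat -> R) : R :=
  match n with O => f O | S m => Rmax (rmax_upto m f) (f n) end.
Fixpoint rmin_upto (n : nat) (f : nat -> R) : R :=
  match n with O => f O | S m => Rmin (rmin_upto m f) (f n) end.

Definition umax (d : nat) (r : nat -> R) : R := rmax_upto (d - 1) r.
Definition vmin (d : nat) (r : nat -> R) : R := rmin_upto (d - 1) r.
Definition gR (d : nat) (r : nat -> R) : R := 1 / rsum d (fun j => 1 / r j).

(* vol(B^d_{2R}) via the explicit formula from the paper's context:
   2^d prod_j Gamma(1 + 1/(2R_j)) / Gamma(1 + sum_j 1/(2R_j)). *)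
Definition volB (d : nat) (r : nat -> R) : R :=
  2 ^ d * rprod d (fun j => Gamma (1 + 1 / (2 * r j)))
    / Gamma (1 + rsum d (fun j => 1 / (2 * r j))).

(* Main.v *)
Require Import Defs.
From Stdlib Require Import Reals Lra Lia.
From Stdlib Require Import Reals Lra ClassicalEpsilon Classical FunctionalExtensionality.
From Coquelicot Require Import Coquelicot.
Open Scope R_scope.

Lemma expl x y : x <= y -> exp x <= exp y.
Proof. intros [H|H]; [left; apply exp_increasing; auto | right; subst; auto]. Qed.

Lemma ln_le_sub1 y : 0 < y -> ln y <= y - 1.
Proof. intros Hy. pose proof (exp_ineq1_le (ln y)) as H. rewrite exp_ln in H; lra. Qed.

Section G.
Variable a : R.
Hypothesis Ha : 0 < a.
Let F := gamma_integrand (1 + a).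

Lemma F_eq t : F t = exp (a * ln t) * exp (- t).
Proof. unfold F, gamma_integrand, Rpower. replace (1 + a - 1) with a by ring. reflexivity. Qed.

Lemma F_nonneg t : 0 <= F t.
Proof. rewrite F_eq. apply Rmult_le_pos; left; apply exp_pos. Qed.

Lemma F_cont t : 0 < t -> continuous F t.
Proof.
  intros Ht. assert (E : F = fun t => exp (a * ln t) * exp (- t)).
  { apply functional_extensionality; intro; apply F_eq. }
  rewrite E. apply (ex_derive_continuous (K := R_AbsRing) (V := R_NormedModule)); auto_derive; lra.
Qed.

Lemma F_ex p q : 0 < p -> 0 < q -> ex_RInt F p q.
Proof.
  intros Hp Hq. apply (ex_RInt_continuous (V := R_CompleteNormedModule)). intros z Hz. apply F_cont.
  assert (0 < Rmin p q) by (apply Rmin_glb_lt; auto). lra.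
Qed.

Definition CU := exp ((a + 1) * ln (1 + a) - a).
Definition CL := exp (a * ln a - a).

Lemma F_upper p q : 0 < p <= q -> RInt F p q <= CU.
Proof.
  intros [Hp Hpq].
  set (K := exp (a * ln (1 + a) - a)).
  set (g := fun t => K * exp (- t / (1 + a))).
  set (G := fun t => - K * (1 + a) * exp (- t / (1 + a))).
  assert (HG : is_RInt g p q (minus (G q) (G p))).
  { apply (is_RInt_derive (V := R_CompleteNormedModule)).
    - intros x _. unfold G, g. auto_derive; auto. change (- K * (1 + a) * (- (1) * / (1 + a) * exp (- x * / (1 + a))) = K * exp (- x * / (1 + a))). field. lra.
    - intros x _. unfold g. apply (ex_derive_continuous (K := R_AbsRing) (V := R_NormedModule)). auto_derive; auto. }
  apply Rle_trans with (RInt g p q).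
  - apply RInt_le; auto.
    + apply F_ex; lra.
    + eexists; eauto.
    + intros t Ht. rewrite F_eq. unfold g, K. rewrite <- exp_plus, <- exp_plus.
      apply expl.
      assert (0 < t) by lra.
      assert (0 < t / (1 + a)) by (apply Rdiv_lt_0_compat; lra). pose proof (ln_le_sub1 (t / (1 + a)) H0) as H1.
      rewrite ln_div in H1 by lra.
      assert (a * ln t - a * ln (1 + a) <= a * (t / (1 + a) - 1)) by (rewrite <- Rmult_minus_distr_l; apply Rmult_le_compat_l; lra).
      assert (a * (t / (1+a) - 1) = t - a + - t / (1 + a)) by (field; lra). lra.
  - rewrite (is_RInt_unique (V := R_CompleteNormedModule) _ _ _ _ HG). unfold minus, plus, opp; simpl. unfold G.
    assert (E: CU = K * (1 + a)).
    { unfold CU, K. rewrite <- (exp_ln (1 + a)) at 3 by lra. rewrite <- exp_plus. f_equal; ring. }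
    rewrite E.
    pose proof (exp_pos (- q / (1 + a))). pose proof (exp_pos (- p / (1 + a))).
    assert (0 < K) by apply exp_pos.
    assert (0 <= K * (1 + a) * exp (- q / (1 + a))) by (apply Rmult_le_pos; [apply Rmult_le_pos|]; lra).
    assert (K * (1 + a) * exp (- p / (1 + a)) <= K * (1 + a) * 1).
    { assert (Hx : exp (- p / (1 + a)) <= exp 0).
      { apply expl. replace (- p / (1 + a)) with (- (p / (1 + a))) by (field; lra).
        assert (0 < p/(1+a)) by (apply Rdiv_lt_0_compat; lra). lra. }
      rewrite exp_0 in Hx. apply Rmult_le_compat_l; [apply Rmult_le_pos; lra | lra]. }
    nra.
Qed.

Lemma F_lower q : a < q -> exp (a * ln a) * (exp (- a) - exp (- q)) <= RInt F a q.
Proof.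
  intros Hq.
  set (K := exp (a * ln a)).
  set (G := fun t => - K * exp (- t)).
  assert (HG : is_RInt (fun t => K * exp (- t)) a q (minus (G q) (G a))).
  { apply (is_RInt_derive (V := R_CompleteNormedModule)).
    - intros x _. unfold G. auto_derive; auto. ring.
    - intros x _. apply (ex_derive_continuous (K := R_AbsRing) (V := R_NormedModule) (fun t => K * exp (- t))). auto_derive; auto. }
  replace (K * (exp (- a) - exp (- q))) with (minus (G q) (G a))
    by (unfold minus, plus, opp, G; simpl; ring).
  rewrite <- (is_RInt_unique (V := R_CompleteNormedModule) _ _ _ _ HG).
  apply RInt_le; [lra| eexists; eauto | apply F_ex; lra |].
  intros t Ht. rewrite F_eq. unfold K. apply Rmult_le_compat_r. left; apply exp_pos.
  apply expl. apply Rmult_le_compat_l. lra. apply ln_le; lra.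
Qed.

Definition EG (y : R) := exists p q, 0 < p <= q /\ y = RInt F p q.

Lemma EG_bound : bound EG.
Proof. exists CU. intros y (p & q & Hpq & ->). apply F_upper; auto. Qed.

Lemma EG_ne : exists y, EG y.
Proof. exists (RInt F 1 1). exists 1, 1. split; [lra|auto]. Qed.

Definition SG := proj1_sig (completeness EG EG_bound EG_ne).

Lemma SG_lub : is_lub EG SG.
Proof. unfold SG. destruct completeness; auto. Qed.

Lemma SG_isG : is_Gamma (1 + a) SG.
Proof.
  intros eps He.
  destruct SG_lub as [Hub Hl].
  assert (exists y, EG y /\ SG - eps < y) as (y & (p & q & Hpq & ->) & Hy).
  { apply NNPP. intro Hn. assert (SG <= SG - eps); [|lra].
    apply Hl. intros y Hy. apply Rnot_lt_le. intro Hc. apply Hn. eauto. }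
  exists p, q. split; [lra|]. split; [lra|].
  intros a' b pr Ha' Hb. rewrite <- RInt_Reals.
  assert (EG (RInt F a' b)) as HE by (exists a', b; split; [lra|auto]).
  pose proof (Hub _ HE).
  assert (RInt F p q <= RInt F a' b).
  { rewrite <- (RInt_Chasles (V := R_CompleteNormedModule) F a' p b) by (apply F_ex; lra).
    rewrite <- (RInt_Chasles (V := R_CompleteNormedModule) F p q b) by (apply F_ex; lra).
    unfold plus; simpl.
    assert (0 <= RInt F a' p) by (apply RInt_ge_0; [lra | apply F_ex; lra | intros; apply F_nonneg]).
    assert (0 <= RInt F q b) by (apply RInt_ge_0; [lra | apply F_ex; lra | intros; apply F_nonneg]).
    lra. }
  change (Rabs (RInt F a' b - SG) < eps). unfold Rabs; destruct Rcase_abs; lra.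
Qed.

Lemma isG_unique g1 g2 : is_Gamma (1 + a) g1 -> is_Gamma (1 + a) g2 -> g1 = g2.
Proof.
  intros H1 H2. apply NNPP. intro Hn.
  assert (0 < Rabs (g1 - g2) / 2).
  { assert (g1 - g2 <> 0) by lra. pose proof (Rabs_pos_lt _ H). lra. }
  destruct (H1 _ H) as (d1 & M1 & Hd1 & HM1 & K1).
  destruct (H2 _ H) as (d2 & M2 & Hd2 & HM2 & K2).
  set (a' := Rmin d1 d2 / 2). set (b := Rmax M1 M2 + 1).
  assert (0 < Rmin d1 d2) by (apply Rmin_glb_lt; auto).
  pose proof (Rmin_l d1 d2). pose proof (Rmin_r d1 d2).
  pose proof (Rmax_l M1 M2). pose proof (Rmax_r M1 M2).
  assert (pr : Riemann_integrable F a' b) by (apply ex_RInt_Reals_0, F_ex; unfold a', b; lra).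
  specialize (K1 a' b pr). specialize (K2 a' b pr).
  assert (Rabs (RiemannInt pr - g1) < Rabs (g1 - g2) / 2) by (apply K1; unfold a', b; lra).
  assert (Rabs (RiemannInt pr - g2) < Rabs (g1 - g2) / 2) by (apply K2; unfold a', b; lra).
  revert H0 H7 H8. unfold Rabs; repeat destruct Rcase_abs; lra.
Qed.

Lemma Gamma_SG : Gamma (1 + a) = SG.
Proof.
  unfold Gamma. apply isG_unique; [|apply SG_isG].
  apply epsilon_spec. exists SG. apply SG_isG.
Qed.

Lemma Gamma_upper : Gamma (1 + a) <= CU.
Proof.
  rewrite Gamma_SG. destruct SG_lub as [_ Hl]. apply Hl.
  intros y (p & q & Hpq & ->). apply F_upper; auto.
Qed.

Lemma Gamma_lower : CL <= Gamma (1 + a).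
Proof.
  rewrite Gamma_SG. destruct SG_lub as [Hub _].
  apply Rnot_lt_le. intro Hc.
  set (D := CL - SG).
  assert (HD : 0 < D) by (unfold D; lra).
  assert (HCL : 0 < CL) by apply exp_pos.
  set (q := a + CL / D + 1).
  assert (Hq : a < q). { unfold q. assert (0 < CL / D) by (apply Rdiv_lt_0_compat; auto). lra. }
  pose proof (F_lower q Hq).
  assert (EG (RInt F a q)) as HE by (exists a, q; split; [lra|auto]).
  pose proof (Hub _ HE).
  assert (Eq : exp (a * ln a) * (exp (- a) - exp (- q)) = CL - CL / exp (q - a)).
  { unfold CL. replace (- q) with (- a + - (q - a)) by ring. replace (a * ln a - a) with (a * ln a + - a) by ring.
    rewrite !exp_plus, (exp_Ropp (q - a)). field. apply Rgt_not_eq, exp_pos. }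
  rewrite Eq in H.
  assert (CL / exp (q - a) < D).
  { pose proof (exp_ineq1_le (q - a)). assert (CL / D < exp (q - a)) by (unfold q in *; lra).
    apply Rmult_lt_compat_l with (r := D) in H2; [|lra].
    replace (D * (CL / D)) with CL in H2 by (field; lra).
    apply Rmult_lt_reg_r with (exp (q - a)); [apply exp_pos|].
    replace (CL / exp (q - a) * exp (q - a)) with CL by (field; apply Rgt_not_eq, exp_pos). lra. }
  unfold D in *; lra.
Qed.
End G.
Open Scope R_scope.

Lemma rsum_le n f g : (forall j, (j < n)%nat -> f j <= g j) -> rsum n f <= rsum n g.
Proof. induction n; simpl; intros H; [lra|]. pose proof (H n ltac:(lia)). assert (rsum n f <= rsum n g) by (apply IHn; intros; apply H; lia). lra. Qed.
Lemma rsum_ext n f g : (forall j, (j < n)%nat -> f j = g j) -> rsum n f = rsum n g.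
Proof. induction n; simpl; intros H; [lra|]. rewrite (H n ltac:(lia)), IHn by (intros; apply H; lia). reflexivity. Qed.
Lemma rsum_scal n c f : rsum n (fun j => c * f j) = c * rsum n f.
Proof. induction n; simpl; [ring|]. rewrite IHn; ring. Qed.
Lemma rsum_plus n f g : rsum n (fun j => f j + g j) = rsum n f + rsum n g.
Proof. induction n; simpl; [ring|]. rewrite IHn; ring. Qed.
Lemma rsum_const n c : rsum n (fun _ => c) = INR n * c.
Proof. induction n; simpl rsum; [simpl; ring|]. rewrite IHn, S_INR; ring. Qed.
Lemma ln_rprod n f : (forall j, (j < n)%nat -> 0 < f j) -> 0 < rprod n f /\ ln (rprod n f) = rsum n (fun j => ln (f j)).
Proof.
  induction n; simpl; intros H. { rewrite ln_1; lra. }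
  destruct IHn as [H1 H2]; [intros; apply H; lia|]. pose proof (H n ltac:(lia)).
  split; [apply Rmult_lt_0_compat; auto|]. rewrite ln_mult, H2; auto.
Qed.
Lemma rmin_le n f j : (j <= n)%nat -> rmin_upto n f <= f j.
Proof.
  induction n; simpl; intros H. { replace j with O by lia; lra. }
  destruct (Nat.eq_dec j (S n)) as [->|Hn]. apply Rmin_r.
  eapply Rle_trans; [apply Rmin_l| apply IHn; lia].
Qed.
Lemma rmax_ge n f j : (j <= n)%nat -> f j <= rmax_upto n f.
Proof.
  induction n; simpl; intros H. { replace j with O by lia; lra. }
  destruct (Nat.eq_dec j (S n)) as [->|Hn]. apply Rmax_r.
  eapply Rle_trans; [apply IHn; lia| apply Rmax_l].
Qed.
Lemma rmin_att n f : exists k, (k <= n)%nat /\ rmin_upto n f = f k.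
Proof.
  induction n; simpl. { exists O; auto. }
  destruct IHn as (k & Hk & E). unfold Rmin. destruct Rle_dec.
  - exists k; split; [lia|auto].
  - exists (S n); auto.
Qed.

Lemma lnG_bounds a : 0 < a ->
  0 < Gamma (1 + a) /\ a * ln a - a <= ln (Gamma (1 + a)) /\ ln (Gamma (1 + a)) <= a * ln (1 + a).
Proof.
  intros Ha. pose proof (Gamma_lower a Ha) as HL. pose proof (Gamma_upper a Ha) as HU.
  unfold CL, CU in *. pose proof (exp_pos (a * ln a - a)).
  assert (HG : 0 < Gamma (1 + a)) by lra. split; [auto|split].
  - rewrite <- (ln_exp (a * ln a - a)). apply ln_le; auto.
  - apply Rle_trans with ((a + 1) * ln (1 + a) - a).
    + rewrite <- (ln_exp ((a + 1) * ln (1 + a) - a)). apply ln_le; auto.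
    + pose proof (ln_le_sub1 (1 + a) ltac:(lra)). lra.
Qed.

Theorem lemma3p4 (d : nat) (r : nat -> R) :
  (1 <= d)%nat ->
  (forall j : nat, (j < d)%nat -> 0 < r j) ->
  (vmin d r <= INR d * gR d r <= umax d r) /\
  (Rpower 2 (vmin d r) * sqrt (1 / (exp 1 * (INR d + 2 * umax d r)))
     <= Rpower (volB d r) (gR d r)
   <= Rpower 2 (umax d r)
      * Rpower ((2 * vmin d r + 1) / (2 * vmin d r)) (umax d r / (2 * vmin d r))
      * sqrt (2 * exp 1 * umax d r / INR d)).
Proof.
  intros Hd Hr.
  assert (Hv : forall j, (j < d)%nat -> vmin d r <= r j) by (intros; apply rmin_le; lia).
  assert (Hu : forall j, (j < d)%nat -> r j <= umax d r) by (intros; apply rmax_ge; lia).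
  assert (vpos : 0 < vmin d r).
  { destruct (rmin_att (d - 1) r) as (k & Hk & E). unfold vmin; rewrite E; apply Hr; lia. }
  assert (upos : 0 < umax d r) by (pose proof (Hu O ltac:(lia)); pose proof (Hr O ltac:(lia)); lra).
  set (u := umax d r) in *. set (v := vmin d r) in *.
  assert (dpos : 0 < INR d) by (apply lt_0_INR; lia).
  set (a := fun j => 1 / (2 * r j)).
  set (s := rsum d a).
  assert (S1 : rsum d (fun j => 1 / r j) = 2 * s).
  { unfold s. rewrite <- rsum_scal. apply rsum_ext. intros j Hj. unfold a. pose proof (Hr j Hj). field; lra. }
  assert (Ha_lo : forall j, (j < d)%nat -> 1 / (2 * u) <= a j).
  { intros j Hj. unfold a. pose proof (Hr j Hj). pose proof (Hu j Hj).
    apply Rmult_le_compat_l; [lra|]. apply Rinv_le_contravar; lra. }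
  assert (Ha_hi : forall j, (j < d)%nat -> a j <= 1 / (2 * v)).
  { intros j Hj. unfold a. pose proof (Hr j Hj). pose proof (Hv j Hj).
    apply Rmult_le_compat_l; [lra|]. apply Rinv_le_contravar; lra. }
  assert (Hapos : forall j, (j < d)%nat -> 0 < a j).
  { intros j Hj. unfold a. pose proof (Hr j Hj). apply Rdiv_lt_0_compat; lra. }
  assert (s_lo : INR d * (1 / (2 * u)) <= s).
  { rewrite <- rsum_const. apply rsum_le; auto. }
  assert (s_hi : s <= INR d * (1 / (2 * v))).
  { rewrite <- rsum_const. apply rsum_le; auto. }
  assert (key : INR d <= 2 * u * s).
  { replace (INR d) with (2 * u * (INR d * (1 / (2 * u)))) by (field; lra).
    apply Rmult_le_compat_l; lra. }
  assert (spos : 0 < s) by nra.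
  assert (key2 : 2 * v * s <= INR d).
  { replace (INR d) with (2 * v * (INR d * (1 / (2 * v)))) by (field; lra).
    apply Rmult_le_compat_l; lra. }
  assert (Hg : gR d r = 1 / (2 * s)) by (unfold gR; rewrite S1; auto).
  assert (P1 : v <= INR d * gR d r <= u).
  { rewrite Hg. split.
    - apply (Rmult_le_reg_r (2 * s)); [lra|]. replace (INR d * (1 / (2 * s)) * (2 * s)) with (INR d) by (field; lra). lra.
    - apply (Rmult_le_reg_r (2 * s)); [lra|]. replace (INR d * (1 / (2 * s)) * (2 * s)) with (INR d) by (field; lra). lra. }
  split; [exact P1|].
  destruct (ln_rprod d (fun j => Gamma (1 + a j))) as [Ppos PL].
  { intros j Hj. apply lnG_bounds; auto. }
  destruct (lnG_bounds s spos) as (Gpos & Gs_lo & Gs_hi).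
  set (L := rsum d (fun j => ln (Gamma (1 + a j)))) in *.
  set (lG := ln (Gamma (1 + s))) in *.
  assert (L_lo : rsum d (fun j => a j * ln (a j) - a j) <= L).
  { apply rsum_le. intros j Hj. apply lnG_bounds; auto. }
  set (Lam := ln ((2 * v + 1) / (2 * v))).
  assert (L_hi : L <= Lam * s).
  { apply Rle_trans with (rsum d (fun j => Lam * a j)); [| rewrite rsum_scal; unfold s; right; reflexivity].
    apply rsum_le. intros j Hj. destruct (lnG_bounds (a j) (Hapos j Hj)) as (_ & _ & H).
    eapply Rle_trans; [exact H|]. rewrite Rmult_comm. apply Rmult_le_compat_r; [left; auto|].
    unfold Lam. apply ln_le; [pose proof (Hapos j Hj); lra|].
    replace ((2 * v + 1) / (2 * v)) with (1 + 1 / (2 * v)) by (field; lra).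
    pose proof (Ha_hi j Hj); lra. }
  assert (Lam_pos : 0 <= Lam).
  { unfold Lam. rewrite <- ln_1. apply ln_le; [lra|].
    apply (Rmult_le_reg_r (2 * v)); [lra|]. replace ((2 * v + 1) / (2 * v) * (2 * v)) with (2 * v + 1) by (field; lra). lra. }
  assert (LS : s * (ln s - ln (INR d)) <= rsum d (fun j => a j * ln (a j))).
  { apply Rle_trans with (rsum d (fun j => (ln s - ln (INR d)) * a j + (a j + (- (s / INR d))))).
    - rewrite rsum_plus, rsum_plus, rsum_scal, rsum_const. fold s. right; field; lra.
    - apply rsum_le. intros j Hj. pose proof (Hapos j Hj) as Haj.
      assert (Hy : 0 < a j * INR d / s) by (apply Rdiv_lt_0_compat; [apply Rmult_lt_0_compat|]; lra).
      pose proof (ln_le_sub1 (/ (a j * INR d / s)) ltac:(apply Rinv_0_lt_compat; lra)) as H.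
      assert (0 < a j * INR d) by nra. rewrite ln_Rinv, ln_div, ln_mult in H by lra.
      replace (/ (a j * INR d / s)) with (s / (a j * INR d)) in H by (field; lra).
      assert (a j * (- (ln (a j) + ln (INR d) - ln s)) <= a j * (s / (a j * INR d) - 1)) by (apply Rmult_le_compat_l; lra).
      assert (a j * (s / (a j * INR d) - 1) = s / INR d - a j) by (field; lra).
      nra. }
  assert (Lsplit : rsum d (fun j => a j * ln (a j) - a j) = rsum d (fun j => a j * ln (a j)) - s).
  { rewrite (rsum_ext d _ (fun j => a j * ln (a j) + (-1) * a j)) by (intros; ring).
    rewrite rsum_plus, rsum_scal. fold s. ring. }
  assert (VB : volB d r = 2 ^ d * rprod d (fun j => Gamma (1 + a j)) / Gamma (1 + s)) by reflexivity.
  assert (VBpos : 0 < volB d r).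
  { rewrite VB. apply Rdiv_lt_0_compat; auto. apply Rmult_lt_0_compat; auto. apply pow_lt; lra. }
  assert (lnVB : ln (volB d r) = INR d * ln 2 + L - lG).
  { rewrite VB, ln_div, ln_mult, ln_pow, PL; auto; try lra. apply pow_lt; lra. apply Rmult_lt_0_compat; auto. apply pow_lt; lra. }
  assert (ln2pos : 0 < ln 2) by (pose proof ln_lt_2; lra).
  assert (gpos : 0 < gR d r) by (rewrite Hg; apply Rdiv_lt_0_compat; lra).
  assert (Hgs : gR d r * s = / 2) by (rewrite Hg; field; lra).
  assert (A1 : v * ln 2 <= INR d * gR d r * ln 2) by (apply Rmult_le_compat_r; lra).
  assert (A2 : INR d * gR d r * ln 2 <= u * ln 2) by (apply Rmult_le_compat_r; lra).
  unfold Rpower. rewrite lnVB.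
  split.
  - assert (X : 0 < 1 / (exp 1 * (INR d + 2 * u))).
    { apply Rdiv_lt_0_compat; [lra|]. apply Rmult_lt_0_compat; [apply exp_pos|lra]. }
    rewrite <- (Rpower_sqrt _ X). unfold Rpower. rewrite <- exp_plus. apply expl.
    assert (E1 : 0 < exp 1) by apply exp_pos.
    assert (E2 : 0 < exp 1 * (INR d + 2 * u)) by (apply Rmult_lt_0_compat; lra).
    rewrite ln_div, ln_1, ln_mult, ln_exp by lra.
    assert (K3 : ln (INR d) + ln (1 + s) <= ln s + ln (INR d + 2 * u)).
    { rewrite <- !ln_mult by lra. apply ln_le; [nra|]. nra. }
    assert (B : - s * (1 + ln (INR d + 2 * u)) <= L - lG) by nra.
    assert (C : gR d r * (- s * (1 + ln (INR d + 2 * u))) <= gR d r * (L - lG)) by (apply Rmult_le_compat_l; lra).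
    replace (gR d r * (- s * (1 + ln (INR d + 2 * u)))) with (- (gR d r * s) * (1 + ln (INR d + 2 * u))) in C by ring.
    rewrite Hgs in C. nra.
  - assert (X : 0 < 2 * exp 1 * u / INR d).
    { apply Rdiv_lt_0_compat; [|lra]. pose proof (exp_pos 1). nra. }
    rewrite <- (Rpower_sqrt _ X). unfold Rpower. rewrite <- !exp_plus. apply expl.
    assert (E1 : 0 < exp 1) by apply exp_pos.
    assert (E2 : 0 < 2 * exp 1) by lra.
    assert (E3 : 0 < 2 * exp 1 * u) by (apply Rmult_lt_0_compat; lra).
    fold Lam.
    rewrite (ln_div (2 * exp 1 * u)), !ln_mult, ln_exp by lra.
    assert (K4 : ln (INR d) <= ln 2 + ln u + ln s).
    { rewrite <- !ln_mult by nra. apply ln_le; nra. }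
    assert (B : L - lG <= Lam * s - s * ln s + s) by nra.
    assert (C : gR d r * (L - lG) <= gR d r * (Lam * s - s * ln s + s)) by (apply Rmult_le_compat_l; lra).
    replace (gR d r * (Lam * s - s * ln s + s)) with ((gR d r * s) * (Lam - ln s + 1)) in C by ring.
    rewrite Hgs in C.
    assert (uv : v <= u) by (pose proof (Hv O ltac:(lia)); pose proof (Hu O ltac:(lia)); lra).
    assert (D : / 2 * Lam <= u / (2 * v) * Lam).
    { apply Rmult_le_compat_r; auto. apply (Rmult_le_reg_r (2 * v)); [lra|].
      replace (u / (2 * v) * (2 * v)) with u by (field; lra). lra. }
    nra.
Qed.
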